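(* The irreducible $\lambda$-quiddities over the ring $(\mathbb{Z}/2\mathbb{Z})\times(\mathbb{Z}/2\mathbb{Z})$ are exactly, up to cyclic permutation, the following tuples (entries written as pairs of residues mod 2): - $((1,1),(1,1),(1,1))$; - $((0,0),(0,0),(0,0),(0,0))$, $((0,0),(0,1),(0,0),(0,1))$, $((0,0),(1,0),(0,0),(1,0))$, $((1,0),(0,1),(1,0),(0,1))$; - $((1,0),(1,0),(1,0),(1,0),(1,0),(1,0))$, $((0,1),(0,1),(0,1),(0,1),(0,1),(0,1))$.
   Context: All rings are commutative with unit. For $a_1,\ldots,a_n\in A$, $M_n(a_1,\ldots,a_n)=\begin{pmatrix}a_n&-1\\1&0\end{pmatrix}\cdots\begin{pmatrix}a_1&-1\\1&0\end{pmatrix}$. An $n$-tuple $(a_1,\ldots,a_n)\in A^n$ is a $\lambda$-quiddity over $A$ if $M_n(a_1,\ldots,a_n)=\pm\mathrm{Id}$. For $(a_1,\ldots,a_n)\in A^n$, $(b_1,\ldots,b_m)\in A^m$, define $(a_1,\ldots,a_n)\oplus(b_1,\ldots,b_m)=(a_1+b_m,a_2,\ldots,a_{n-1},a_n+b_1,b_2,\ldots,b_{m-1})$. Write $(a_1,\ldots,a_n)\sim(b_1,\ldots,b_n)$ if $(b_1,\ldots,b_n)$ is obtained from $(a_1,\ldots,a_n)$ or from $(a_n,\ldots,a_1)$ by a cyclic permutation. A $\lambda$-quiddity $(c_1,\ldots,c_n)$ with $n\ge3$ is reducible if there exist a $\lambda$-quiddity $(b_1,\ldots,b_l)$ and a tuple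 $(a_1,\ldots,a_m)$ with $l,m\ge3$ and $(c_1,\ldots,c_n)\sim(a_1,\ldots,a_m)\oplus(b_1,\ldots,b_l)$; it is irreducible otherwise (by convention $(0,0)$ is reducible). *)

(* Defs.v *)
From HB Require Import structures.
From mathcomp Require Import all_boot all_order all_algebra.
Set Implicit Arguments. Unset Strict Implicit. Unset Printing Implicit Defensive.
Import GRing.Theory.
Local Open Scope ring_scope.

Section Quiddity.
Variable A : comRingType.

Definition Mq (a : A) : 'M[A]_2 :=
  \matrix_(i < 2, j < 2)
    (if i == 0 :> nat then (if j == 0 :> nat then a else -1)
     else (if j == 0 :> nat then 1 else 0)).

(** M_n(a_1,...,a_n) = Mq a_n * ... * Mq a_1 *)
Definition Mn (s : seq A) : 'M[A]_2 := foldl (fun acc a => Mq a *m acc) 1%:M s.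

Definition lambda_quiddity (s : seq A) : Prop := Mn s = 1%:M \/ Mn s = - 1%:M.

(** (a_1..a_n) (+) (b_1..b_m) = (a_1+b_m, a_2..a_{n-1}, a_n+b_1, b_2..b_{m-1}),
    meaningful for n, m >= 2 (used only with n, m >= 3). *)
Definition qsum (a b : seq A) : seq A :=
  let n := size a in let m := size b in
  [:: nth 0 a 0 + nth 0 b m.-1] ++ take n.-2 (drop 1 a)
  ++ [:: nth 0 a n.-1 + nth 0 b 0] ++ take m.-2 (drop 1 b).

Definition qequiv (c d : seq A) : Prop :=
  exists k, d = rot k c \/ d = rot k (rev c).

Definition reducible (c : seq A) : Prop :=
  c = [:: 0; 0] \/
  (3 <= size c)%N /\
  exists (a b : seq A), lambda_quiddity b /\ (3 <= size b)%N /\ (3 <= size a)%N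
                        /\ qequiv c (qsum a b).

Definition irreducible_lq (c : seq A) : Prop :=
  lambda_quiddity c /\ (3 <= size c)%N /\ ~ reducible c.

End Quiddity.

Definition Z2Z2 : comRingType := ('Z_2 * 'Z_2)%type.

Definition p (x y : nat) : Z2Z2 := (x%:R, y%:R).

Definition irreducible_list : seq (seq Z2Z2) :=
  [:: [:: p 1 1; p 1 1; p 1 1];
      [:: p 0 0; p 0 0; p 0 0; p 0 0];
      [:: p 0 0; p 0 1; p 0 0; p 0 1];
      [:: p 0 0; p 1 0; p 0 0; p 1 0];
      [:: p 1 0; p 0 1; p 1 0; p 0 1];
      [:: p 1 0; p 1 0; p 1 0; p 1 0; p 1 0; p 1 0];
      [:: p 0 1; p 0 1; p 0 1; p 0 1; p 0 1; p 0 1]].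

(* Main.v *)
Require Import Defs.
From mathcomp Require Import all_boot all_order all_algebra.
From mathcomp Require Import zify.
Import GRing.Theory.
Local Open Scope ring_scope.

Definition tup := (Z2Z2 * Z2Z2 * Z2Z2 * Z2Z2)%type.
Definition stp (t : tup) (a : Z2Z2) : tup :=
  let '(m11, m12, m21, m22) := t in (a * m11 - m21, a * m12 - m22, m11, m12).
Definition I4 : tup := (1, 0, 0, 1).
Definition qb (s : seq Z2Z2) : bool := foldl stp I4 s == I4.
Definition L4 := [:: p 0 0; p 0 1; p 1 0; p 1 1].

Definition mxt (t : tup) : 'M[Z2Z2]_2 :=
  let '(m11, m12, m21, m22) := t in
  \matrix_(i < 2, j < 2)
    (if i == 0 :> nat then (if j == 0 :> nat then m11 else m12)
     else (if j == 0 :> nat then m21 else m22)).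

Lemma Mq_mxt a t : Mq a *m mxt t = mxt (stp t a).
Proof.
case: t => [[[m11 m12] m21] m22]; apply/matrixP => i j.
rewrite !mxE !big_ord_recr big_ord0 /= !mxE /= add0r.
case: i => [[|[|//]] Hi]; case: j => [[|[|//]] Hj] /=;
  rewrite ?mul1r ?mul0r ?mulN1r ?addr0 ?add0r //.
Qed.

Lemma one_mxt : (1%:M : 'M[Z2Z2]_2) = mxt I4.
Proof.
apply/matrixP => i j; rewrite !mxE.
by case: i => [[|[|//]] Hi]; case: j => [[|[|//]] Hj].
Qed.

Lemma Mn_mxt s : Mn s = mxt (foldl stp I4 s).
Proof.
rewrite /Mn one_mxt; elim: s I4 => //= a s IH t.
by rewrite Mq_mxt IH.
Qed.

Lemma N1 : (-1 : Z2Z2) = 1.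
Proof. by apply/eqP; vm_compute. Qed.

Lemma mN1 : (- 1%:M : 'M[Z2Z2]_2) = 1%:M.
Proof.
apply/matrixP => i j; rewrite !mxE.
by case: (i == j); rewrite /= ?oppr0 ?N1.
Qed.

Lemma mxt_inj t t' : mxt t = mxt t' -> t = t'.
Proof.
case: t => [[[a b] c] d]; case: t' => [[[a' b'] c'] d'] /matrixP H.
have := H 0 0; have := H 0 1; have := H 1 0; have := H 1 1.
rewrite !mxE /=.
by move=> -> -> -> ->.
Qed.

Lemma lq_qb s : lambda_quiddity s <-> qb s.
Proof.
rewrite /lambda_quiddity /qb mN1 Mn_mxt one_mxt; split.
  by case=> /mxt_inj ->.
by move/eqP => ->; left.
Qed.

Lemma memL4 x : x \in L4.
Proof. by case: x => [[[|[|n]] Hx] [[|[|m]] Hy]]. Qed.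

Lemma qsum_eq (a0 al b0 bl : Z2Z2) (am bm : seq Z2Z2) :
  qsum (a0 :: rcons am al) (b0 :: rcons bm bl) = (a0 + bl) :: am ++ (al + b0) :: bm.
Proof.
rewrite /qsum /= !size_rcons /= !nth_rcons ltnn eqxx.
by rewrite ltnn eqxx !drop0 -!cats1 !take_size_cat.
Qed.

Lemma Lred (c y bm : seq Z2Z2) k b0 bl :
  lambda_quiddity (b0 :: rcons bm bl) -> (0 < size bm)%N -> (3 <= size y)%N ->
  rot k c = y ++ bm -> reducible c.
Proof.
move=> Hb Hbm Hy Hc; right; split.
  have := congr1 size Hc; rewrite size_rot size_cat => ->; lia.
case: y Hy Hc => [|y0 y'] //= Hy Hc.
case/lastP: y' Hy Hc => [|ym yl] Hy Hc; first by [].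
exists ((y0 - bl) :: rcons ym (yl - b0)), (b0 :: rcons bm bl).
split => //; split; first by rewrite /= size_rcons.
split; first by move: Hy; rewrite /= !size_rcons.
exists k; left; rewrite qsum_eq Hc !subrK /= cat_rcons //.
Qed.

Definition inlist (c : seq Z2Z2) : bool :=
  has (fun t => has (fun k => c == rot k t) (iota 0 6)) irreducible_list.

Lemma inlistP c : inlist c -> exists (k : nat) (t : seq Z2Z2), t \in irreducible_list /\ c = rot k t.
Proof.
case/hasP => t Ht /hasP [k _ /eqP ->]; by exists k, t.
Qed.

Lemma chk3 : all (fun x => all (fun y => all (fun z =>
   qb [:: x; y; z] ==> inlist [:: x; y; z]) L4) L4) L4.
Proof. by vm_compute. Qed.

Lemma chk4 : all (fun x => all (fun y => all (fun z => all (fun w =>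
   (p 1 1 \notin [:: x; y; z; w]) && qb [:: x; y; z; w] ==> inlist [:: x; y; z; w]) L4) L4) L4) L4.
Proof. by vm_compute. Qed.

Definition nodec (d : seq Z2Z2) : bool :=
  all (fun m => all (fun b0 => all (fun bl =>
     ~~ qb (b0 :: rcons (drop (size d + 2 - m) d) bl)) L4) L4) (iota 3 (size d - 3)).

Lemma chkB : all (fun t => all (fun k => let c := rot k t in
   qb c && all (fun j => nodec (rot j c) && nodec (rot j (rev c))) (iota 0 (size t)))
   (iota 0 (size t))) irreducible_list.
Proof. by vm_compute. Qed.

Lemma chkper : all (fun e => all (fun a => all (fun b => all (fun c => all (fun d =>
   foldl stp (a, b, c, d) (nseq 6 e) == (a, b, c, d)) L4) L4) L4) L4) [:: p 1 0; p 0 1].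
Proof. by vm_compute. Qed.

Lemma chkmod : all (fun e => all (fun r => ~~ qb (nseq r e)) (iota 1 5)) [:: p 1 0; p 0 1].
Proof. by vm_compute. Qed.

Lemma chk6 : all (fun e => qb (e :: rcons (nseq 4 e) e) && (nseq 6 e \in irreducible_list))
  [:: p 1 0; p 0 1].
Proof. by vm_compute. Qed.

Lemma chksz : all (fun t => (3 <= size t)%N) irreducible_list.
Proof. by []. Qed.

Lemma no11 c : (4 <= size c)%N -> ~ reducible c -> p 1 1 \notin c.
Proof.
move=> Hs Hnr; apply/negP => Hin; move: Hs Hnr; case/splitPr: Hin => s1 s2 Hs Hnr.
apply: Hnr; apply: (@Lred _ (s2 ++ s1) [:: p 1 1] (size s1).+1 (p 1 1) (p 1 1)).
- by apply/lq_qb; vm_compute.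
- by [].
- move: Hs; rewrite !size_cat /=; lia.
- have ->: s1 ++ p 1 1 :: s2 = rcons s1 (p 1 1) ++ s2 by rewrite cat_rcons.
  by rewrite -(size_rcons s1 (p 1 1)) rot_size_cat -cats1 catA.
Qed.

Lemma pair_case u v : u != p 1 1 -> v != p 1 1 ->
  (v = u /\ (u = p 1 0 \/ u = p 0 1)) \/
  exists b0 bl, lambda_quiddity (b0 :: rcons [:: u; v] bl).
Proof.
move=> Hu Hv.
move: (memL4 u) (memL4 v); rewrite /L4 !inE => /or4P [] /eqP E1 /or4P [] /eqP E2; subst u v.
all: try by rewrite eqxx in Hu.
all: try by rewrite eqxx in Hv.
all: try by left; split; [|left].
all: try by left; split; [|right].
all: try by right; exists (p 0 0), (p 0 0); apply/lq_qb; vm_compute.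
all: try by right; exists (p 0 0), (p 0 1); apply/lq_qb; vm_compute.
all: try by right; exists (p 0 1), (p 0 0); apply/lq_qb; vm_compute.
all: try by right; exists (p 0 0), (p 1 0); apply/lq_qb; vm_compute.
all: try by right; exists (p 1 0), (p 0 0); apply/lq_qb; vm_compute.
all: try by right; exists (p 1 0), (p 0 1); apply/lq_qb; vm_compute.
all: try by right; exists (p 0 1), (p 1 0); apply/lq_qb; vm_compute.
Qed.

Lemma nored_pair c s1 u v s2 : (5 <= size c)%N -> ~ reducible c ->
  c = s1 ++ u :: v :: s2 -> v = u /\ (u = p 1 0 \/ u = p 0 1).
Proof.
move=> Hs Hnr Hc.
have Hn := @no11 c (ltnW Hs) Hnr.
have Hu : u != p 1 1.
  by apply: contraNneq Hn => <-; rewrite Hc mem_cat in_cons eqxx orbT.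
have Hv : v != p 1 1.
  by apply: contraNneq Hn => <-; rewrite Hc mem_cat !in_cons eqxx !orbT.
case: (@pair_case u v Hu Hv) => // -[b0 [bl Hb]].
exfalso; apply: Hnr; apply: (@Lred c (s2 ++ s1) [:: u; v] (size s1).+2 b0 bl Hb) => //.
- move: Hs; rewrite Hc !size_cat /=; lia.
- rewrite Hc.
  have ->: s1 ++ u :: v :: s2 = (s1 ++ [:: u; v]) ++ s2 by rewrite -catA.
  have ->: (size s1).+2 = size (s1 ++ [:: u; v]) by rewrite size_cat addn2.
  by rewrite rot_size_cat catA.
Qed.

Lemma const_of (c : seq Z2Z2) x0 :
  (forall s1 u v s2, c = s1 ++ u :: v :: s2 -> v = u) -> c = nseq (size c) (head x0 c).
Proof.
elim: c => //= x c IH H.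
case: c IH H => //= y c IH H.
have Hy : y = x by apply: (H [::] x y c).
have E : y :: c = nseq (size c).+1 y.
  apply: IH => s1 u v s2 E; apply: (H (x :: s1)); by rewrite E.
by rewrite {1}E Hy.
Qed.

Lemma per e t : e \in [:: p 1 0; p 0 1] -> foldl stp t (nseq 6 e) = t.
Proof.
move=> He; case: t => [[[a b] c] d]; apply/eqP.
by move: (allP chkper e He) => /allP/(_ a (memL4 a))/allP/(_ b (memL4 b))
   /allP/(_ c (memL4 c))/allP/(_ d (memL4 d)).
Qed.

Lemma permod e n : e \in [:: p 1 0; p 0 1] -> qb (nseq n e) = qb (nseq (n %% 6) e).
Proof.
move=> He; elim/ltn_ind: n => n IH.
case: (ltnP n 6) => Hn; first by rewrite modn_small.
have -> : n = (6 + (n - 6))%N by lia.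
rewrite modnDl -IH; last lia.
by rewrite /qb nseqD foldl_cat per.
Qed.

Lemma nodec_false (a0 al b0 bl : Z2Z2) am bm : (0 < size am)%N -> (0 < size bm)%N ->
  lambda_quiddity (b0 :: rcons bm bl) ->
  nodec (qsum (a0 :: rcons am al) (b0 :: rcons bm bl)) = false.
Proof.
move=> Ha Hb /lq_qb Hq; rewrite qsum_eq; apply/negbTE/negP; rewrite /nodec => /allP H.
set d := (a0 + bl) :: _ in H.
have Hsd : size d = (size am + size bm).+2 by rewrite /d /= size_cat /= addnS.
have Hm : ((size bm).+2 \in iota 3 (size d - 3)) by rewrite mem_iota Hsd; lia.
move: (H _ Hm) => /allP/(_ b0 (memL4 b0))/allP/(_ bl (memL4 bl)).
have -> : drop (size d + 2 - (size bm).+2) d = bm.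
  rewrite Hsd.
  have ->: ((size am + size bm).+2 + 2 - (size bm).+2)%N = (size am).+2 by lia.
  by rewrite /d /= drop_cat ltnNge leqnSn /= subSnn /= drop0.
by rewrite Hq.
Qed.

Lemma fwd c : irreducible_lq c ->
  exists (k : nat) (t : seq Z2Z2), t \in irreducible_list /\ c = rot k t.
Proof.
case=> Hq [Hs Hnr].
have Hqb := proj1 (lq_qb c) Hq.
case: (ltnP (size c) 5) => H5.
  apply: inlistP.
  case: c Hs Hq Hqb Hnr H5 => [|x [|y [|z [|w [|v c]]]]] //= Hs Hq Hqb Hnr H5.
    move: (allP chk3 x (memL4 x)) => /allP/(_ y (memL4 y))/allP/(_ z (memL4 z)).
    by rewrite Hqb.
  have H1 := @no11 [:: x; y; z; w] isT Hnr.
  move: (allP chk4 x (memL4 x)) => /allP/(_ y (memL4 y))/allP/(_ z (memL4 z))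
    /allP/(_ w (memL4 w)).
  by rewrite H1 Hqb.
have Hc := @const_of c (p 0 0) (fun s1 u v s2 E => proj1 (@nored_pair c s1 u v s2 H5 Hnr E)).
have He : head (p 0 0) c \in [:: p 1 0; p 0 1].
  case: c Hs Hq Hqb Hnr H5 Hc => [|x [|y c]] //= Hs Hq Hqb Hnr H5 Hc.
  have [_ [->|->]] := @nored_pair [:: x, y & c] [::] x y c H5 Hnr erefl.
    by rewrite inE eqxx.
  by rewrite !inE eqxx orbT.
move: Hc Hqb H5 Hnr; set e := head (p 0 0) c; set n := size c => Hc Hqb H5 Hnr.
have /andP [Hq6 Hin6] := allP chk6 e He.
have Hmod : (n %% 6 = 0)%N.
  apply/eqP; apply/negP => Hnz.
  have Hr : (n %% 6 \in iota 1 5)%N.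
    rewrite mem_iota; have := ltn_pmod n (isT : (0 < 6)%N); move: Hnz; lia.
  have := allP (allP chkmod e He) _ Hr.
  by rewrite -permod // -Hc Hqb.
case: (ltnP n 7) => H7.
  have n6 : n = 6%N by lia.
  exists 0%N, (nseq 6 e); rewrite rot0 Hc n6; split => //.
exfalso; apply: Hnr.
apply: (@Lred c (nseq (n - 4) e) (nseq 4 e) 0 e e).
- exact/lq_qb.
- by rewrite size_nseq.
- rewrite size_nseq; lia.
- rewrite rot0 {1}Hc -nseqD subnK //; lia.
Qed.

Lemma bwd c k t : t \in irreducible_list -> c = rot k t -> irreducible_lq c.
Proof.
move=> Ht -> {c}.
have Hst : (3 <= size t)%N := allP chksz t Ht.
have [k' Hk' ->] : exists2 k', (k' < size t)%N & rot k t = rot k' t.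
  case: (ltnP k (size t)) => Hk; first by exists k.
  by exists 0%N; [lia | rewrite rot0 rot_oversize].
have Hk'i : k' \in iota 0 (size t) by rewrite mem_iota; lia.
move: (allP chkB t Ht) => /allP/(_ k' Hk'i) /andP [Hq Hall].
set c := rot k' t in Hq Hall *.
have Hsc : size c = size t by rewrite size_rot.
split; first exact/lq_qb.
split; first by rewrite Hsc.
case=> [E | [_ [a [b [Hb [Hbs [Has [j Hj]]]]]]]].
  have := congr1 size E; rewrite Hsc /= => H2; by rewrite H2 in Hst.
have [j' Hj' [Ej1 Ej2]] : exists2 j', (j' < size t)%N &
    rot j c = rot j' c /\ rot j (rev c) = rot j' (rev c).
  case: (ltnP j (size t)) => Hj0; first by exists j.
  exists 0%N; first lia.
  by rewrite !rot0 !rot_oversize // ?size_rev Hsc.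
have Hj'i : j' \in iota 0 (size t) by rewrite mem_iota; lia.
move: (allP Hall j' Hj'i) => /andP [N1 N2].
case: a Has Hj => [|a0 a'] //; case/lastP: a' => [|am al] //= Has Hj.
case: b Hb Hbs Hj => [|b0 b'] //; case/lastP: b' => [|bm bl] //= Hb Hbs Hj.
have Has' : (0 < size am)%N by move: Has; rewrite ?size_rcons.
have Hbs' : (0 < size bm)%N by move: Hbs; rewrite ?size_rcons.
have := @nodec_false a0 al b0 bl am bm Has' Hbs' Hb.
by case: Hj => ->; rewrite ?Ej1 ?Ej2 ?N1 ?N2.
Qed.

Theorem theorem2p6 (c : seq Z2Z2) :
  irreducible_lq c <-> exists (k : nat) (t : seq Z2Z2), t \in irreducible_list /\ c = rot k t.
Proof.
split; first exact: fwd.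
by case=> k [t [Ht Hc]]; exact: (@bwd c k t).
Qed.
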